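(* Let $A=\mathbb{C}[x,y,z]$, let $s,t\in A\setminus\{0\}$ be coprime and equip $A$ with the Poisson bracket $\{x,y\}=t s_z-s t_z$, $\{y,z\}=t s_x-s t_x$, $\{z,x\}=t s_y-s t_y$. Let $(\lambda,\mu)\in\mathbb{P}^1(\mathbb{C})$ be such that $f_{\lambda,\mu}:=\lambda s-\mu t$ is a non-zero non-unit and let $u$ be an irreducible factor of $f_{\lambda,\mu}$ in $A$. Then $f_{\lambda,\mu}A$ is a Poisson ideal and $uA$ is a Poisson prime ideal of $A$.
   Context: Subscripts denote partial derivatives. A Poisson ideal is an ideal $I$ with $\{a,I\}\subseteq I$ for all $a\in A$; a Poisson prime ideal is a Poisson ideal that is prime. *)

(* Defs.v *)
From mathcomp Require Import all_boot all_algebra.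
From mathcomp Require Import Rstruct.
From mathcomp Require Import complex.
From mathcomp Require Export mpoly.
Set Implicit Arguments. Unset Strict Implicit. Unset Printing Implicit Defensive.
Import GRing.Theory.
Local Open Scope ring_scope.

Definition C : rcfType := Rdefinitions.R.
Notation CC := (complex C).

Section Defs.
Variable K : idomainType.
Notation A := {mpoly K[3]}.

Definition ix : 'I_3 := @Ordinal 3 0 isT.
Definition iy : 'I_3 := @Ordinal 3 1 isT.
Definition iz : 'I_3 := @Ordinal 3 2 isT.

Definition dx (p : A) : A := p^`M(ix).
Definition dy (p : A) : A := p^`M(iy).
Definition dz (p : A) : A := p^`M(iz).

Definition mdvd (d p : A) : Prop := exists q : A, p = d * q.

Definition mcoprime (s t : A) : Prop :=
  forall d : A, mdvd d s -> mdvd d t -> d \is a GRing.unit.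

Definition mirreducible (u : A) : Prop :=
  [/\ u != 0, u \isn't a GRing.unit &
      forall a b : A, u = a * b -> a \is a GRing.unit \/ b \is a GRing.unit].

(* The Poisson bracket determined by s, t:
   {x,y} = t s_z - s t_z, {y,z} = t s_x - s t_x, {z,x} = t s_y - s t_y,
   extended as the (unique) biderivation:
   {f,g} = sum_{i,j} f_i g_j {x_i,x_j}. *)
Definition pbr (s t f g : A) : A :=
  (dx f * dy g - dy f * dx g) * (t * dz s - s * dz t)
  + (dy f * dz g - dz f * dy g) * (t * dx s - s * dx t)
  + (dz f * dx g - dx f * dz g) * (t * dy s - s * dy t).

Definition pideal (a : A) : A -> Prop := fun p => mdvd a p.

Definition is_ideal (I : A -> Prop) : Prop :=
  [/\ I 0, (forall p q, I p -> I q -> I (p + q)) & (forall a p, I p -> I (a * p))].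

Definition poisson_ideal (s t : A) (I : A -> Prop) : Prop :=
  is_ideal I /\ (forall a p, I p -> I (pbr s t a p)).

Definition prime_ideal (I : A -> Prop) : Prop :=
  [/\ is_ideal I, ~ I 1 & forall a b, I (a * b) -> I a \/ I b].

Definition poisson_prime_ideal (s t : A) (I : A -> Prop) : Prop :=
  poisson_ideal s t I /\ prime_ideal I.

End Defs.

(* Main.v *)
Require Import Defs.
From mathcomp Require Import all_boot all_algebra.
From mathcomp Require Import complex.
From mathcomp Require Import ring zify.
From Stdlib Require Import Classical.
Import GRing.Theory.
Local Open Scope ring_scope.

Section P.
Variable K : fieldType.
Notation A := {mpoly K[3]}.

Lemma pbr_leib (s t a g q : A) :
  pbr s t a (g * q) = q * pbr s t a g + g * pbr s t a q.
Proof. rewrite /pbr /dx /dy /dz !mderivM; ring. Qed.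

Lemma ideal_pideal (g : A) : is_ideal (pideal g).
Proof.
split.
- by exists 0; rewrite mulr0.
- by move=> p q [p' ->] [q' ->]; exists (p' + q'); rewrite mulrDr.
- by move=> a p [p' ->]; exists (a * p'); ring.
Qed.

Lemma poisson_of (s t g : A) :
  (forall a, mdvd g (pbr s t a g)) -> poisson_ideal s t (pideal g).
Proof.
move=> H; split; first exact: ideal_pideal.
move=> a p [q ->]; rewrite pbr_leib; case: (H a) => e ->.
by exists (q * e + pbr s t a q); ring.
Qed.

Lemma scaleE (c : K) (p : A) : c *: p = c%:MP * p.
Proof. by rewrite mul_mpolyC. Qed.

Lemma dZ (i : 'I_3) (l m : K) (s t : A) :
  (l *: s - m *: t)^`M(i) = l%:MP * s^`M(i) - m%:MP * t^`M(i).
Proof. by rewrite mderivB !mderivZ !scaleE. Qed.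

Lemma poisson_f (s t : A) (l m : K) :
  poisson_ideal s t (pideal (l *: s - m *: t)).
Proof.
apply: poisson_of => a; rewrite /pbr /dx /dy /dz !dZ.
set ax := a^`M(ix); set ay := a^`M(iy); set az := a^`M(iz).
set sx := s^`M(ix); set sy := s^`M(iy); set sz := s^`M(iz).
set tx := t^`M(ix); set ty := t^`M(iy); set tz := t^`M(iz).
exists (- (ax * (sy * tz - sz * ty) - ay * (sx * tz - sz * tx) + az * (sx * ty - sy * tx))).
rewrite !scaleE; ring.
Qed.

Lemma poisson_u (s t u : A) (l m : K) :
  (l, m) != (0, 0) -> mdvd u (l *: s - m *: t) ->
  poisson_ideal s t (pideal u).
Proof.
move=> nz [h eh]; apply: poisson_of => a.
have dh (i : 'I_3) : l%:MP * s^`M(i) - m%:MP * t^`M(i) = u^`M(i) * h + u * h^`M(i).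
  by rewrite -dZ eh mderivM.
have eh' : l%:MP * s - m%:MP * t = u * h by rewrite -!scaleE.
set ax := a^`M(ix); set ay := a^`M(iy); set az := a^`M(iz).
set ux := u^`M(ix); set uy := u^`M(iy); set uz := u^`M(iz).
set hx := h^`M(ix); set hy := h^`M(iy); set hz := h^`M(iz).
set tx := t^`M(ix); set ty := t^`M(iy); set tz := t^`M(iz).
set sx := s^`M(ix); set sy := s^`M(iy); set sz := s^`M(iz).
pose D (vx vy vz : A) := (ax * uy - ay * ux) * vz + (ay * uz - az * uy) * vx + (az * ux - ax * uz) * vy.
have E1 : l%:MP * pbr s t a u = D (t * (ux * h + u * hx) - u * h * tx)
    (t * (uy * h + u * hy) - u * h * ty) (t * (uz * h + u * hz) - u * h * tz).
  rewrite -!dh -eh' /D /pbr /dx /dy /dz -/ax -/ay -/az -/ux -/uy -/uz -/sx -/sy -/sz -/tx -/ty -/tz.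
  ring.
have E2 : m%:MP * pbr s t a u = D (s * (ux * h + u * hx) - u * h * sx)
    (s * (uy * h + u * hy) - u * h * sy) (s * (uz * h + u * hz) - u * h * sz).
  rewrite -!dh -eh' /D /pbr /dx /dy /dz -/ax -/ay -/az -/ux -/uy -/uz -/sx -/sy -/sz -/tx -/ty -/tz.
  ring.
have [l0|l0] := eqVneq l 0.
  have m0 : m != 0 by move: nz; rewrite l0 xpair_eqE eqxx.
  exists (m^-1%:MP * (s * D hx hy hz - h * D sx sy sz)).
  have -> : pbr s t a u = m^-1%:MP * (m%:MP * pbr s t a u).
    by rewrite mulrA -mpolyCM mulVf // mul1r.
  rewrite E2 /D; ring.
exists (l^-1%:MP * (t * D hx hy hz - h * D tx ty tz)).
have -> : pbr s t a u = l^-1%:MP * (l%:MP * pbr s t a u).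
  by rewrite mulrA -mpolyCM mulVf // mul1r.
rewrite E1 /D; ring.
Qed.
End P.

Set Implicit Arguments. Unset Strict Implicit.

Section Gen.
Variable R : idomainType.
Definition dv (a b : R) := exists q, b = a * q.
Definition irr (u : R) := [/\ u != 0, u \isn't a GRing.unit &
      forall a b : R, u = a * b -> a \is a GRing.unit \/ b \is a GRing.unit].
Definition prm (p : R) := [/\ p != 0, p \isn't a GRing.unit &
      forall a b, dv p (a * b) -> dv p a \/ dv p b].
Definition IP := forall u, irr u -> prm u.
Definition FACT := forall d, d != 0 -> exists e (s : seq R),
   [/\ e \is a GRing.unit, (forall x, x \in s -> prm x) & d = e * \prod_(x <- s) x].
End Gen.
Arguments dv {R}.
Arguments irr {R}.
Arguments prm {R}.

Lemma size_dec (R : nzRingType) (p : {poly R}) : p != 0 ->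
  (size (p - lead_coef p *: 'X^((size p).-1))%R < size p)%N.
Proof.
move=> nz; have sp : (0 < size p)%N by rewrite size_poly_gt0.
rewrite -(prednK sp) ltnS; apply/leq_sizeP => j hj.
rewrite coefB coefZ coefXn.
move: hj; rewrite leq_eqVlt => /orP[/eqP<-|hj].
  by rewrite eqxx mulr1 /lead_coef subrr.
rewrite (gtn_eqF hj) mulr0 subr0 nth_default //.
by rewrite -(prednK sp).
Qed.

Section Gauss.
Variable R : idomainType.
Implicit Types (a b c : R).

Lemma dvC_coef c (p : {poly R}) i : dv c%:P p -> dv c p`_i.
Proof. by move=> [q ->]; exists q`_i; rewrite coefCM. Qed.

Lemma dv_trans (T : idomainType) (a b c : T) : dv a b -> dv b c -> dv a c.
Proof. by move=> [x ->] [y ->]; exists (x * y); rewrite mulrA. Qed.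

Lemma dvB (T : idomainType) (a b c : T) : dv a b -> dv a c -> dv a (b - c).
Proof. by move=> [x ->] [y ->]; exists (x - y); rewrite mulrBr. Qed.

Lemma dvD (T : idomainType) (a b c : T) : dv a b -> dv a c -> dv a (b + c).
Proof. by move=> [x ->] [y ->]; exists (x + y); rewrite mulrDr. Qed.

Lemma dvM (T : idomainType) (a b c : T) : dv a b -> dv a (b * c).
Proof. by move=> [x ->]; exists (x * c); rewrite mulrA. Qed.

Lemma dv0 (T : idomainType) (a : T) : dv a 0.
Proof. by exists 0; rewrite mulr0. Qed.

Lemma lead_split (p : {poly R}) c e : lead_coef p = c * e ->
  p = (p - lead_coef p *: 'X^((size p).-1)) + c%:P * (e *: 'X^((size p).-1)).
Proof. by move=> ->; rewrite -scalerA mul_polyC subrK. Qed.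

Lemma primeC c : prm c -> forall a b : {poly R}, dv c%:P (a * b) -> dv c%:P a \/ dv c%:P b.
Proof.
case=> c0 cu cp.
suff H : forall n (a b : {poly R}), (size a + size b <= n)%N ->
   dv c%:P (a * b) -> dv c%:P a \/ dv c%:P b.
  by move=> a b; apply: (H _ a b (leqnn _)).
elim=> [|n IH] a b hs hd.
  by left; move: hs; rewrite leqn0 addn_eq0 size_poly_eq0 => /andP[/eqP-> _]; apply: dv0.
have [->|a0] := eqVneq a 0; first by left; apply: dv0.
have [->|b0] := eqVneq b 0; first by right; apply: dv0.
have : dv c (lead_coef (a * b)) by rewrite /lead_coef; apply: dvC_coef.
rewrite lead_coefM => /cp [[e he]|[e he]].
  set a' := a - lead_coef a *: 'X^((size a).-1).
  have ea : a' = a - c%:P * (e *: 'X^((size a).-1)) by rewrite /a' he -scalerA mul_polyC.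
  have : dv c%:P (a' * b).
    have -> : a' * b = a * b - c%:P * ((e *: 'X^((size a).-1)) * b) by rewrite ea; ring.
    by apply: dvB => //; exists ((e *: 'X^((size a).-1)) * b).
  case/IH.
  - by rewrite -ltnS; apply: leq_trans hs; rewrite ltn_add2r; apply: size_dec.
  - move=> h; left; have -> : a = a' + c%:P * (e *: 'X^((size a).-1)) by rewrite ea subrK.
    by apply: dvD => //; exists (e *: 'X^((size a).-1)).
  - by right.
set b' := b - lead_coef b *: 'X^((size b).-1).
have eb : b' = b - c%:P * (e *: 'X^((size b).-1)) by rewrite /b' he -scalerA mul_polyC.
have : dv c%:P (a * b').
  have -> : a * b' = a * b - c%:P * (a * (e *: 'X^((size b).-1))) by rewrite eb; ring.
  by apply: dvB => //; exists (a * (e *: 'X^((size b).-1))).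
case/IH.
- by rewrite -ltnS; apply: leq_trans hs; rewrite ltn_add2l; apply: size_dec.
- by left.
- move=> h; right; have -> : b = b' + c%:P * (e *: 'X^((size b).-1)) by rewrite eb subrK.
  by apply: dvD => //; exists (e *: 'X^((size b).-1)).
Qed.


Lemma cancel_list (s : seq R) : (forall x, x \in s -> prm x) ->
  forall e, e \is a GRing.unit -> forall u v w : {poly R},
  (e * \prod_(x <- s) x)%:P * u = v * w ->
  exists c1 c2 v' w', [/\ v = c1%:P * v', w = c2%:P * w' & u = v' * w'].
Proof.
elim: s => [|p s IH] hs e eu u v w.
  rewrite big_nil mulr1 => h.
  exists e, 1, (e^-1%:P * v), w; split.
  - by rewrite mulrA -polyCM mulrV // mul1r.
  - by rewrite mul1r.
  - by rewrite -mulrA -h mulrA -polyCM mulVr // mul1r.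
rewrite big_cons => h.
have pp : prm p by apply: hs; rewrite mem_head.
have hs' : forall x, x \in s -> prm x by move=> x xs; apply: hs; rewrite in_cons xs orbT.
have p0 : p%:P != 0 :> {poly R} by rewrite polyC_eq0; case: pp.
have : dv p%:P (v * w).
  by exists ((e * \prod_(x <- s) x)%:P * u); rewrite -h [RHS]mulrA -polyCM; congr (_%:P * _); ring.
case/(primeC pp) => [[v1 ev]|[w1 ew]].
  have h' : (e * \prod_(x <- s) x)%:P * u = v1 * w.
    apply: (mulfI p0); rewrite [LHS]mulrA -polyCM [RHS]mulrA -ev -h.
    by congr (_%:P * _); ring.
  have [c1 [c2 [v' [w' [e1 e2 e3]]]]] := IH hs' e eu _ _ _ h'.
  by exists (p * c1), c2, v', w'; split => //; rewrite ev e1 polyCM mulrA.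
have h' : (e * \prod_(x <- s) x)%:P * u = v * w1.
  apply: (mulfI p0); rewrite [LHS]mulrA -polyCM [RHS]mulrCA -ew -h.
  by congr (_%:P * _); ring.
have [c1 [c2 [v' [w' [e1 e2 e3]]]]] := IH hs' e eu _ _ _ h'.
by exists c1, (p * c2), v', w'; split => //; rewrite ew e2 polyCM mulrA.
Qed.

Lemma cancelF : FACT R -> forall c (u v w : {poly R}), c != 0 -> c%:P * u = v * w ->
  exists c1 c2 v' w', [/\ v = c1%:P * v', w = c2%:P * w' & u = v' * w'].
Proof.
move=> hF c u v w c0; have [e [s [eu hs ->]]] := hF c c0.
exact: cancel_list.
Qed.

Lemma unit_size (p : {poly R}) : p \is a GRing.unit -> size p = 1%N.
Proof. by rewrite poly_unitE => /andP[/eqP]. Qed.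

Lemma cancel_prim : FACT R -> forall (u : {poly R}), irr u -> (1 < size u)%N ->
  forall c (a w : {poly R}), c != 0 -> c%:P * a = u * w -> dv u a.
Proof.
move=> hF u [u0 uu ui] su c a w c0 h.
have [c1 [c2 [v' [w' [e1 e2 e3]]]]] := cancelF hF c0 h.
case: (ui _ _ e1) => [c1u|v'u].
  by exists (c1%:P^-1 * w'); rewrite e3 e1 [c1%:P * v']mulrC -mulrA mulVKr.
move: su; rewrite e1 mul_polyC.
have c10 : c1 != 0 by apply: contraNneq u0; rewrite e1 => ->; rewrite mul0r.
by rewrite size_scale // unit_size.
Qed.

Lemma gauss : IP R -> FACT R -> IP [the idomainType of {poly R}].
Proof.
move=> hI hF u iu; have [u0 uu ui] := iu.
split => // a b [q hq].
have [su|su] := leqP (size u) 1.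
  have eu := size1_polyC su.
  have pu : prm u`_0.
    apply: hI; split.
    - by apply: contraNneq u0 => h; rewrite eu h.
    - apply: contra uu => h.
      have nz : u`_0 != 0 by apply/negP => /eqP e; move: h; rewrite e unitr0.
      by rewrite eu poly_unitE size_polyC coefC /= h nz.
    - move=> x y hxy; have : u = x%:P * y%:P by rewrite eu hxy polyCM.
      by case/ui; rewrite poly_unitE coefC /= => /andP[_ ?]; [left|right].
  rewrite eu; apply: primeC => //; by rewrite -eu; exists q.
have L : forall n (r : {poly R}), (size r <= n)%N -> r != 0 ->
    (exists al be, r = al * u + be * a) ->
    dv u a \/ exists d, d != 0 /\ exists al be, d%:P = al * u + be * a.
  elim=> [|n IH] r sr r0 [al [be er]].
    by move: r0; rewrite -size_poly_eq0; move: sr; rewrite leqn0 => ->.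
  have lc0 : lead_coef r != 0 by rewrite lead_coef_eq0.
  have du := Pdiv.Idomain.divp_eq u r.
  have [m0|m0] := eqVneq (u %% r) 0; last first.
    apply: (IH (u %% r)) => //.
      by rewrite -ltnS; apply: leq_trans sr; rewrite Pdiv.Idomain.ltn_modp.
    exists ((lead_coef r ^+ scalp u r)%:P - (u %/ r) * al), (- ((u %/ r) * be)).
    apply: (addrI ((u %/ r) * r)); rewrite -du -mul_polyC er; ring.
  have da := Pdiv.Idomain.divp_eq a r.
  have [m1|m1] := eqVneq (a %% r) 0; last first.
    apply: (IH (a %% r)) => //.
      by rewrite -ltnS; apply: leq_trans sr; rewrite Pdiv.Idomain.ltn_modp.
    exists (- ((a %/ r) * al)), ((lead_coef r ^+ scalp a r)%:P - (a %/ r) * be).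
    apply: (addrI ((a %/ r) * r)); rewrite -da -mul_polyC er; ring.
  have [sr1|sr1] := leqP (size r) 1.
    right; exists r`_0; split; last by exists al, be; rewrite -size1_polyC.
    by apply: contraNneq r0 => h; rewrite (size1_polyC sr1) h.
  left.
  move: du da; rewrite m0 m1 !addr0 -!mul_polyC => du da.
  have [c1 [c2 [v' [w' [e1 e2 e3]]]]] := cancelF hF (expf_neq0 (scalp u r) lc0) du.
  have [q1u|w'u] := ui _ _ e3; last first.
    move: sr1; rewrite e2 mul_polyC.
    have c20 : c2 != 0 by apply: contraNneq r0; rewrite e2 => ->; rewrite mul0r.
    by rewrite size_scale // unit_size.
  apply: (cancel_prim hF iu _ (expf_neq0 (scalp a r) lc0) (w := (a %/ r) * c2%:P * v'^-1)) => //.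
  rewrite da; move: (a %/ r) => q2; rewrite e2 e3 -{1}(mulKr q1u w'); move: (v'^-1) => vi; ring.
have hu : exists al be, u = al * u + be * a by exists 1, 0; rewrite mul1r mul0r addr0.
case: (L _ u (leqnn _) u0 hu) => [h|[d [d0 [al [be ed]]]]]; first by left.
right; apply: (cancel_prim hF iu su d0 (w := al * b + be * q)).
rewrite ed mulrDl -[be * a * b]mulrA hq; ring.
Qed.
End Gauss.

Section Uniq.
Variable K : fieldType.
Variable k : nat.
Variable T : comNzRingType.

Lemma mpoly_morph_uniq (F G : {mpoly K[k]} -> T) :
  {morph F : x y / x + y} -> {morph F : x y / x * y} -> F 0 = 0 -> F 1 = 1 ->
  {morph G : x y / x + y} -> {morph G : x y / x * y} -> G 0 = 0 -> G 1 = 1 ->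
  (forall c, F c%:MP = G c%:MP) -> (forall i, F 'X_i = G 'X_i) ->
  forall p, F p = G p.
Proof.
move=> FD FM F0 F1 GD GM G0 G1 hC hX p.
rewrite (mpolyE p) (big_morph F FD F0) (big_morph G GD G0).
apply: eq_bigr => m _; rewrite -mul_mpolyC FM GM hC; congr (_ * _).
rewrite mpolyXE_id.
apply: (big_ind (fun x => F x = G x)).
- by rewrite F1 G1.
- by move=> x y hx hy; rewrite FM GM hx hy.
move=> i _.
elim: (m i) => [|j IH]; first by rewrite !expr0 F1 G1.
by rewrite !exprS FM GM hX IH.
Qed.

End Uniq.
Section Uni.
Variable K : fieldType.
Variable n : nat.
Local Notation wd := (widen_ord (leqnSn n)).

Lemma muniXmax : muni ('X_ord_max : {mpoly K[n.+1]}) = 'X.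
Proof.
rewrite muniE msuppX big_seq1 mcoeffX eqxx scale1r.
have -> : [multinom (U_(@ord_max n) (wd i))%MM | i < n] = 0%MM.
  apply/mnmP => i; rewrite !mnmE /=; suff -> : (ord_max == wd i) = false by [].
  by apply/negbTE; rewrite eq_sym neq_ltn /= ltn_ord.
by rewrite mpolyX0 mnm1E eqxx expr1 -mul_polyC polyC1 mul1r.
Qed.

Lemma muniXw (j : 'I_n) : muni ('X_(wd j) : {mpoly K[n.+1]}) = ('X_j)%:P.
Proof.
rewrite muniE msuppX big_seq1 mcoeffX eqxx scale1r.
have -> : [multinom (U_(wd j))%MM (wd i) | i < n] = U_(j)%MM.
  apply/mnmP => i; rewrite !mnmE; congr (nat_of_bool _).


rewrite mnm1E.
have -> : (wd j == ord_max) = false by apply/negbTE; rewrite neq_ltn /= ltn_ord.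
by rewrite expr0 -mul_polyC mulr1.
Qed.

Definition gM (q : {poly {mpoly K[n]}}) : {mpoly K[n.+1]} :=
  (map_poly (@mwiden n K) q).['X_ord_max].

Lemma gMD : {morph gM : x y / x + y}.
Proof. by move=> x y; rewrite /gM rmorphD hornerD. Qed.
Lemma gMM : {morph gM : x y / x * y}.
Proof. by move=> x y; rewrite /gM rmorphM hornerM. Qed.
Lemma gM0 : gM 0 = 0. Proof. by rewrite /gM rmorph0 horner0. Qed.
Lemma gM1 : gM 1 = 1. Proof. by rewrite /gM rmorph1 hornerC. Qed.
Lemma gMC c : gM c%:P = mwiden c. Proof. by rewrite /gM map_polyC hornerC. Qed.
Lemma gMX : gM 'X = 'X_ord_max. Proof. by rewrite /gM map_polyX hornerX. Qed.

Lemma muni_wd : forall p : {mpoly K[n]}, muni (mwiden p) = p%:P.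
Proof.
apply: (@mpoly_morph_uniq K n _ (fun p => muni (mwiden p)) (fun p => p%:P)).
- by move=> x y; rewrite mwidenD muniD.
- by move=> x y; rewrite mwidenM muniM.
- by rewrite mwiden0 muni0.
- by rewrite mwiden1 muni1.
- by move=> x y; rewrite polyCD.
- by move=> x y; rewrite polyCM.
- by rewrite polyC0.
- by rewrite polyC1.
- by move=> c; rewrite mwidenC muniC.
- by move=> i; rewrite mwidenX mnmwiden1 muniXw.
Qed.

Lemma gK : forall p : {mpoly K[n.+1]}, gM (muni p) = p.
Proof.
apply: (@mpoly_morph_uniq K n.+1 _ (fun p => gM (muni p)) id) => //.
- by move=> x y; rewrite muniD gMD.
- by move=> x y; rewrite muniM gMM.
- by rewrite muni0 gM0.
- by rewrite muni1 gM1.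
- by move=> c; rewrite muniC gMC mwidenC.
move=> i; have [->|ne] := eqVneq i ord_max; first by rewrite muniXmax gMX.
have ilt : (i < n)%N by move: (ltn_ord i); rewrite ltnS leq_eqVlt; case: eqP => // h; case/eqP: ne; apply: val_inj.
have -> : i = wd (Ordinal ilt) by apply: val_inj.
by rewrite muniXw gMC mwidenX mnmwiden1.
Qed.

Lemma Kg : forall q : {poly {mpoly K[n]}}, muni (gM q) = q.
Proof.
move=> q; have eq : q = \sum_(i < size q) q`_i *: 'X^i by rewrite -poly_def coefK.
rewrite [in LHS]eq [in RHS]eq (big_morph gM gMD gM0) (big_morph _ (@muniD _ _) (@muni0 _ _)).
apply: eq_bigr => i _.
rewrite -mul_polyC gMM muniM gMC muni_wd; congr (_ * _).
elim: (nat_of_ord i) => [|k IH]; first by rewrite !expr0 gM1 muni1.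
by rewrite !exprS gMM muniM IH gMX muniXmax.
Qed.
End Uni.

Section Transfer.
Variables R S : idomainType.
Variables (f : R -> S) (g : S -> R).
Hypotheses (fM : {morph f : x y / x * y}) (f1 : f 1 = 1) (f0 : f 0 = 0)
  (gM_ : {morph g : x y / x * y}) (g1 : g 1 = 1) (g0 : g 0 = 0)
  (fK : cancel f g) (gK_ : cancel g f).

Lemma unit_morph (T U : idomainType) (h : T -> U) : {morph h : x y / x * y} -> h 1 = 1 ->
  forall x, x \is a GRing.unit -> h x \is a GRing.unit.
Proof.
move=> hM h1 x /unitrP [y [e1 e2]]; apply/unitrP; exists (h y).
by rewrite -!hM e1 e2 h1.
Qed.

Lemma IP_transfer : IP S -> IP R.
Proof.
move=> hS u [u0 uu ui].
have iu : irr (f u).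
  split.
  - by apply: contraNneq u0 => h; rewrite -(fK u) h g0.
  - by apply: contra uu => /(unit_morph gM_ g1); rewrite fK.
  - move=> a b e; have : u = g a * g b by rewrite -gM_ -e fK.
    by case/ui => /(unit_morph fM f1); rewrite gK_; [left|right].
have [_ _ pf] := hS _ iu.
split => // a b [q e].
have : dv (f u) (f a * f b) by exists (f q); rewrite -!fM e.
by case/pf => [[q' e']|[q' e']]; [left|right]; exists (g q');
  rewrite -[LHS]fK e' gM_ fK.
Qed.
End Transfer.

Section MP.
Variable K : fieldType.

Lemma mpC_unit n (c : K) : c != 0 -> (c%:MP : {mpoly K[n]}) \is a GRing.unit.
Proof.
move=> c0; apply/unitrP; exists (c^-1)%:MP.
by rewrite -!mpolyCM mulVf // mulfV // mpolyC1.
Qed.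

Lemma mp_small_unit n (p : {mpoly K[n]}) : p != 0 -> (msize p <= 1)%N -> p \is a GRing.unit.
Proof.
move=> p0 sp; rewrite (msize1_polyC sp); apply: mpC_unit.
by apply: contraNneq p0 => h; rewrite (msize1_polyC sp) h.
Qed.

Lemma mp_unit_size n (p : {mpoly K[n]}) : p \is a GRing.unit -> msize p = 1%N.
Proof.
case/unitrP => q [e1 _].
have p0 : p != 0 by apply: contra_eq_neq e1 => ->; rewrite mulr0 eq_sym oner_neq0.
have q0 : q != 0 by apply: contra_eq_neq e1 => ->; rewrite mul0r eq_sym oner_neq0.
have := congr1 (fun r : {mpoly K[n]} => msize r) e1; rewrite /=; rewrite msizeM // msize1.
have hp : (0 < msize p)%N by rewrite lt0n msize_poly_eq0.
have hq : (0 < msize q)%N by rewrite lt0n msize_poly_eq0.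
move=> h; set a := msize p in h hp *; set b := msize q in h hq; lia.
Qed.

Lemma IP0 : IP [the idomainType of {mpoly K[0]}].
Proof.
move=> u [u0 uu _]; case/negP: uu; apply: mp_small_unit => //.
rewrite (nvar0_mpolyC u) msizeC; by case: (_ == 0).
Qed.

Lemma FACT_of_IP n : IP [the idomainType of {mpoly K[n]}] -> FACT [the idomainType of {mpoly K[n]}].
Proof.
move=> hI.
suff H : forall k (d : {mpoly K[n]}), (msize d <= k)%N -> d != 0 -> exists e (s : seq {mpoly K[n]}),
   [/\ e \is a GRing.unit, (forall x, x \in s -> prm x) & d = e * \prod_(x <- s) x].
  by move=> d d0; apply: (H _ d (leqnn _) d0).
elim=> [|k IH] d sd d0.
  by move: d0; rewrite -msize_poly_eq0; move: sd; rewrite leqn0 => ->.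
have [du|du] := boolP (d \is a GRing.unit).
  by exists d, [::]; split => //; rewrite big_nil mulr1.
have [id|nid] := classic (irr d).
  exists 1, [:: d]; split; [exact: unitr1| |by rewrite big_seq1 mul1r].
  by move=> x; rewrite mem_seq1 => /eqP ->; apply: hI.
have [a [b [e [au bu]]]] : exists a b, [/\ d = a * b, a \isn't a GRing.unit & b \isn't a GRing.unit].
  apply: NNPP => hn; apply: nid; split => // a b e.
  apply: NNPP => hab; apply: hn; exists a, b; split => //.
  - by apply/negP => h; apply: hab; left.
  - by apply/negP => h; apply: hab; right.
have a0 : a != 0 by apply: contraNneq d0; rewrite e => ->; rewrite mul0r.
have b0 : b != 0 by apply: contraNneq d0; rewrite e => ->; rewrite mulr0.
have sa : (1 < msize a)%N by rewrite ltnNge; apply: contra au; apply: mp_small_unit.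
have sb : (1 < msize b)%N by rewrite ltnNge; apply: contra bu; apply: mp_small_unit.
have sab : msize d = (msize a + msize b).-1 by rewrite e msizeM.
have [ka kb] : (msize a <= k)%N /\ (msize b <= k)%N.
  move: sd sa sb; rewrite sab; set x := msize a; set y := msize b; lia.
have [ea [sa' [eau hsa ha]]] := IH a ka a0.
have [eb [sb' [ebu hsb hb]]] := IH b kb b0.
exists (ea * eb), (sa' ++ sb'); split.
- by rewrite unitrM eau ebu.
- by move=> x; rewrite mem_cat => /orP[]; [apply: hsa|apply: hsb].
- by rewrite e ha hb big_cat /=; ring.
Qed.

Lemma IP_mpoly n : IP [the idomainType of {mpoly K[n]}].
Proof.
elim: n => [|n IH]; first exact: IP0.
have hP := gauss IH (FACT_of_IP IH).
have fM : {morph (@muni n K) : x y / x * y} by move=> x y; rewrite muniM.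
exact: (IP_transfer fM (@muni1 n K) (@gMM K n) (@gM1 K n) (@gM0 K n) (@gK K n) (@Kg K n) hP).
Qed.
End MP.


Theorem lemma3p4 (s t : {mpoly CC[3]}) (lam mu : CC) (u : {mpoly CC[3]}) :
  s != 0 -> t != 0 -> mcoprime s t ->
  (lam, mu) != (0, 0) ->
  lam *: s - mu *: t != 0 ->
  lam *: s - mu *: t \isn't a GRing.unit ->
  mirreducible u -> mdvd u (lam *: s - mu *: t) ->
  poisson_ideal s t (pideal (lam *: s - mu *: t)) /\
  poisson_prime_ideal s t (pideal u).
Proof.
move=> _ _ _ nz _ _ iu hd.
split; first exact: poisson_f.
split; first exact: (@poisson_u _ s t u lam mu nz hd).
have pu : prm u by apply: (@IP_mpoly CC 3); exact: iu.
case: pu => u0 uu up.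
split.
- exact: ideal_pideal.
- move=> [q e]; case/negP: uu; apply/unitrP; exists q.
  by rewrite mulrC -e.
- move=> a b h; exact: up.
Qed.
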